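(* Let $m,n\ge 0$ be integers with $m-n\equiv 0\pmod 2$, and put $N=m+n$. Let $1<p,q,r<\infty$ satisfy $\frac1r=\frac1p+\frac1q-1$. Then $$\left(\frac{2}{r+1}+\sum_{j=0}^{N-1}\frac{\binom{N}{j+1}^{r+1}-\binom{N}{j}^{r+1}}{(r+1)\left[\binom{N}{j+1}-\binom{N}{j}\right]}\right)^{1/r} \le \Big(\sum_{j=0}^{m}\binom{m}{j}^q\Big)^{1/q}\Big(\sum_{j=0}^{n}\binom{n}{j}^p\Big)^{1/p}.$$ (Since $N$ is even, $\binom{N}{j+1}\ne\binom{N}{j}$ for all $0\le j\le N-1$, so all denominators are nonzero.)
   Context: Binomial coefficients have their usual meaning. *)

(* Defs.v *)
From HB Require Import structures.
From mathcomp Require Import all_boot all_order all_algebra.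
From mathcomp Require Import all_classical all_reals all_analysis.
Set Implicit Arguments. Unset Strict Implicit. Unset Printing Implicit Defensive.

(* Main.v *)
Require Import Defs.
From HB Require Import structures.
Set Implicit Arguments. Unset Strict Implicit.
From mathcomp Require Import all_boot all_order all_algebra.
From mathcomp Require Import all_classical all_reals all_analysis.
From mathcomp Require Import ring lra.
Import Order.TTheory GRing.Theory Num.Theory.
Local Open Scope ring_scope.

Section S.
Variable R : realType.

Lemma W2 (a b t : R) : 0 <= a -> 0 <= b -> 0 < t < 1 ->
  a `^ t * b `^ (1 - t) <= t * a + (1 - t) * b.
Proof.
move=> a0 b0 /andP[t0 t1].
have t10 : 0 < 1 - t by rewrite subr_gt0.
have := @conjugate_powR _ (a `^ t) (b `^ (1 - t)) t^-1 (1 - t)^-1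
  (powR_ge0 _ _) (powR_ge0 _ _).
rewrite !invr_gt0 t0 t10 !invrK addrC subrK => /(_ erefl erefl erefl).
rewrite -!powRrM !mulfV ?gt_eqF // !powRr1 //.
by rewrite [t * a]mulrC [(1 - t) * b]mulrC.
Qed.

Lemma tangent (y t r : R) : 0 < y -> 0 < t -> 1 < r ->
  r * y * t `^ (r - 1) <= y `^ r + (r - 1) * t `^ r.
Proof.
move=> y0 t0 r1.
have r0 : 0 < r by rewrite (lt_trans _ r1).
have hr : 0 < r^-1 < 1 by rewrite invr_gt0 r0 invf_lt1.
have := @W2 (y `^ r) (t `^ r) r^-1 (powR_ge0 _ _) (powR_ge0 _ _) hr.
rewrite -!powRrM mulfV ?gt_eqF // (powRr1 (ltW y0)).
have -> : r * (1 - r^-1) = r - 1 by rewrite mulrBr mulr1 mulfV ?gt_eqF.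
move=> H.
have := ler_wpM2l (ltW r0) H.
rewrite mulrA mulrDr mulrA mulfV ?gt_eqF // mul1r mulrA.
have -> : r * (1 - r^-1) = r - 1 by rewrite mulrBr mulr1 mulfV ?gt_eqF.
by [].
Qed.

Lemma HHcore (x y r : R) : 0 < y -> y < x -> 1 < r ->
  2 * (x `^ (r+1) - y `^ (r+1)) <= (r+1) * (x - y) * (x `^ r + y `^ r).
Proof.
move=> y0 yx r1.
pose phi t := (r+1) * ((t - y) * (t `^ r + y `^ r)) - 2 * t `^ (r+1).
have D (t : R) : 0 < t -> is_derive t 1 phi
   ((r+1) * ((t `^ r + y `^ r) + (t - y) * (r * t `^ (r-1))) - 2 * ((r+1) * t `^ (r+1-1))).
  move=> t0.
  have H1 := is_derive1_powR r t0.
  have H2 := is_derive1_powR (r+1) t0.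
  rewrite /phi.
  apply: is_derive_eq.
  by rewrite addr0 subr0 /GRing.scale /=; ring.
have dpos (t : R) : y < t -> 0 <= (r+1) * ((t `^ r + y `^ r) + (t - y) * (r * t `^ (r-1))) - 2 * ((r+1) * t `^ (r+1-1)).
  move=> yt; have t0 : 0 < t by apply: lt_trans yt.
  have r0 : 0 < r by apply: lt_trans r1.
  have key := tangent y0 t0 r1.
  have e := mulr_powRB1 (ltW t0) r0.
  rewrite addrK -e; rewrite -e in key.
  set P := t `^ (r - 1) in key *; set Y := y `^ r in key *.
  have -> : (r + 1) * (t * P + Y + (t - y) * (r * P)) - 2 * ((r + 1) * (t * P))
     = (r + 1) * (Y + (r - 1) * (t * P) - r * y * P) by ring.
  by apply: mulr_ge0; [lra | rewrite subr_ge0].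
have h1 : forall t, t \in `]y, x[ -> derivable phi t 1.
  move=> t; rewrite in_itv /= => /andP[yt _].
  by have [] := D t (lt_trans y0 yt).
have h2 : forall t, t \in `]y, x[ -> 0 <= derive1 phi t.
  move=> t; rewrite in_itv /= => /andP[yt _].
  rewrite derive1E; have [_ ->] := D t (lt_trans y0 yt).
  by apply: dpos.
have h3' : {in `[y, x], forall t, derivable phi t 1}.
  move=> t; rewrite in_itv /= => /andP[yt _].
  by have [] := D t (lt_le_trans y0 yt).
have h3 := derivable_within_continuous h3'.
have mono := @ger0_derive1_ndecr R phi y x h1 h2 h3 y x (lexx y) (ltW yx) (lexx x).
move: mono; rewrite /phi subrr mul0r mulr0 add0r.
lra.
Qed.

Lemma HH (x y r : R) : 0 < x -> 0 < y -> 1 < r ->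
  0 <= (x `^ (r+1) - y `^ (r+1)) / ((r+1) * (x - y)) <= (x `^ r + y `^ r) / 2.
Proof.
move=> x0 y0 r1.
have r0 : 0 < r + 1 by lra.
wlog yx : x y x0 y0 / y <= x.
  move=> W; have [yx|xy] := leP y x; first exact: W.
  have := W y x y0 x0 (ltW xy).
  have -> : (y `^ (r + 1) - x `^ (r + 1)) / ((r + 1) * (y - x)) =
            (x `^ (r + 1) - y `^ (r + 1)) / ((r + 1) * (x - y)).
    by rewrite -(opprB x y) -(opprB (x `^ _)) mulrN invrN mulrNN.
  by rewrite [y `^ r + _]addrC.
move: yx; rewrite le_eqVlt => /orP[/eqP->|yx].
  rewrite !subrr mulr0 invr0 mulr0 lexx /=.
  by apply: divr_ge0; [apply: addr_ge0; apply: powR_ge0 | lra].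
have D0 : 0 < (r + 1) * (x - y) by apply: mulr_gt0; lra.
have N0 : y `^ (r+1) < x `^ (r+1).
  by apply: gt0_ltr_powR => //; rewrite nnegrE ltW.
have core := HHcore y0 yx r1.
apply/andP; split.
  by apply: divr_ge0; lra.
rewrite ler_pdivrMr //.
move: core; set X := x `^ r; set Y := y `^ r; set N := _ - _; set D := (r + 1) * (x - y).
rewrite -/D. 
lra.
Qed.

Lemma AMGM3 (u v w a b c : R) : 0 <= u -> 0 <= v -> 0 <= w ->
  0 < a -> 0 < b -> 0 < c -> a + b + c = 1 ->
  u `^ a * v `^ b * w `^ c <= a * u + b * v + c * w.
Proof.
move=> u0 v0 w0 a0 b0 c0 abc.
pose s := b + c.
have s0 : 0 < s by rewrite /s; lra.
have sa : s = 1 - a by rewrite /s; lra.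
pose b' := b / s.
have hb' : 0 < b' < 1.
  by rewrite /b' divr_gt0 //= ltr_pdivrMr // mul1r /s; lra.
have hc : 1 - b' = c / s.
  rewrite /b' /s; field; lra.
pose W := v `^ b' * w `^ (1 - b').
have W0 : 0 <= W by rewrite /W mulr_ge0 // powR_ge0.
have HW : W <= b' * v + (1 - b') * w by apply: W2.
have ha : 0 < a < 1 by lra.
have H1 := W2 u0 W0 ha.
have E : v `^ b * w `^ c = W `^ (1 - a).
  rewrite -sa /W powRM ?powR_ge0 // -!powRrM hc /b' !mulfVK ?gt_eqF //.
apply: (le_trans (y := a * u + (1 - a) * W)).
  by rewrite -mulrA E.
rewrite -addrA lerD2l -sa.
have := ler_wpM2l (ltW s0) HW.
rewrite mulrDr hc /b' !mulrA [s * b / s]mulrAC [s * c / s]mulrAC mulfV ?gt_eqF // !mul1r. by [].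
Qed.

Lemma holder3 (K : nat) (x y z : nat -> R) (a b c Y Z : R) :
  0 < a -> 0 < b -> 0 < c -> a + b + c = 1 ->
  (forall i, 0 <= x i) -> (forall i, 0 <= y i) -> (forall i, 0 <= z i) ->
  \sum_(i < K) y i <= Y -> \sum_(i < K) z i <= Z -> 0 < Y -> 0 < Z ->
  \sum_(i < K) x i `^ a * y i `^ b * z i `^ c
    <= (\sum_(i < K) x i) `^ a * Y `^ b * Z `^ c.
Proof.
move=> a0 b0 c0 abc x0 y0 z0 sY sZ Y0 Z0.
set X := \sum_(i < K) x i.
have X0 : 0 <= X by apply: sumr_ge0 => i _.
have RHS0 : 0 <= X `^ a * Y `^ b * Z `^ c by rewrite !mulr_ge0 ?powR_ge0.
move: X0; rewrite le_eqVlt => /orP[/eqP X0|X0].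
  have xi0 : forall i : 'I_K, x i = 0.
    by move=> i; apply: (psumr_eq0P (P := predT) (F := fun i : 'I_K => x i)) => // j _.
  rewrite big1 // => i _; rewrite xi0 powR0 ?gt_eqF // !mul0r //.
set Kc := X `^ a * Y `^ b * Z `^ c.
apply: (le_trans (y := \sum_(i < K) Kc * ((a / X) * x i + (b / Y) * y i + (c / Z) * z i))).
  apply: ler_sum => i _.
  have e1 : x i `^ a = X `^ a * (x i / X) `^ a.
    by rewrite -powRM ?(ltW X0) ?(divr_ge0 (x0 i) (ltW X0)) // mulrCA mulfV ?gt_eqF // mulr1.
  have e2 : y i `^ b = Y `^ b * (y i / Y) `^ b.
    by rewrite -powRM ?(ltW Y0) ?(divr_ge0 (y0 i) (ltW Y0)) // mulrCA mulfV ?gt_eqF // mulr1.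
  have e3 : z i `^ c = Z `^ c * (z i / Z) `^ c.
    by rewrite -powRM ?(ltW Z0) ?(divr_ge0 (z0 i) (ltW Z0)) // mulrCA mulfV ?gt_eqF // mulr1.
  have H := @AMGM3 _ _ _ a b c (divr_ge0 (x0 i) (ltW X0)) (divr_ge0 (y0 i) (ltW Y0)) (divr_ge0 (z0 i) (ltW Z0)) a0 b0 c0 abc.
  have Kc0 : 0 <= Kc by [].
  have := ler_wpM2l Kc0 H.
  rewrite e1 e2 e3 /Kc.
  have -> : a * (x i / X) + b * (y i / Y) + c * (z i / Z) = a / X * x i + b / Y * y i + c / Z * z i.
    by rewrite !mulrA ![_ * _ / _]mulrAC.
  move=> H2; apply: le_trans H2; rewrite le_eqVlt; apply/orP; left; apply/eqP.
  by rewrite !mulrA; ring.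
rewrite -mulr_sumr !big_split /= -!mulr_sumr.
rewrite -[X in _ <= X]mulr1 ler_wpM2l //.
rewrite -/X -mulrA mulVf ?gt_eqF // mulr1 -abc -!addrA lerD2l.
apply: lerD; rewrite mulrAC ler_pdivrMr //; apply: ler_wpM2l => //; exact: ltW.
Qed.

Lemma psum_le (F : nat -> R) (n K : nat) : (forall i, 0 <= F i) ->
  (forall i, (n < i)%N -> F i = 0) ->
  \sum_(i < K) F i <= \sum_(i < n.+1) F i.
Proof.
move=> F0 Fz.
rewrite -!(big_mkord xpredT F).
apply: (le_trans (y := \sum_(0 <= i < K + n.+1) F i)).
  rewrite (@big_cat_nat _ _ _ K 0 (K + n.+1)) //=; last exact: leq_addr.
  by rewrite lerDl; apply: sumr_ge0.
rewrite (@big_cat_nat _ _ _ n.+1 0 (K + n.+1)) //=; last exact: leq_addl.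
rewrite [X in _ + X]big1_seq ?addr0 //.
by move=> i /andP[_]; rewrite mem_index_iota => /andP[hi _]; apply: Fz.
Qed.

Lemma rev_sum (G : nat -> R) (k : nat) :
  \sum_(i < k.+1) G (k - i)%N = \sum_(i < k.+1) G i.
Proof.
rewrite -(big_mkord xpredT G) big_rev_mkord subn0.
by apply: eq_bigr => i _.
Qed.

Lemma conv_le (F G : nat -> R) (K : nat) : (forall i, 0 <= F i) -> (forall i, 0 <= G i) ->
  \sum_(k < K) \sum_(i < k.+1) F i * G (k - i)%N
   <= (\sum_(i < K) F i) * (\sum_(j < K) G j).
Proof.
move=> F0 G0.
have E : \sum_(k < K) \sum_(i < k.+1) F i * G (k - i)%N =
         \sum_(k < K) \sum_(i < K | (i < k.+1)%N) F i * G (k - i)%N.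
  apply: eq_bigr => k _.
  by rewrite (big_ord_widen K (fun i => F i * G (k - i)%N)) //.
rewrite E (exchange_big_dep xpredT) //= mulr_suml.
apply: ler_sum => i _.
rewrite -mulr_sumr ler_wpM2l //.
rewrite -(big_mkord (fun k => (i < k.+1)%N) (fun k => G (k - i)%N)).
have -> : \sum_(0 <= k < K | (i < k.+1)%N) G (k - i)%N = \sum_(i <= k < K) G (k - i)%N.
  by rewrite big_geq_mkord [RHS]big_geq_mkord; apply: eq_bigl => k /=; rewrite andbT.
rewrite -{1}(add0n i) big_addn.
have -> : \sum_(0 <= k < K - i) G (k + i - i)%N = \sum_(0 <= k < K - i) G k.
  by apply: eq_bigr => k _; rewrite addnK.
rewrite -(big_mkord xpredT G).
rewrite [X in _ <= X](@big_cat_nat _ _ _ (K - i) 0 K) //=; last exact: leq_subr.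
by rewrite lerDl; apply: sumr_ge0.
Qed.

Lemma decomp (s t p q a b c : R) : 0 <= s -> 0 <= t ->
  q * (a + b) = 1 -> p * (a + c) = 1 ->
  s * t = (s `^ q * t `^ p) `^ a * (s `^ q) `^ b * (t `^ p) `^ c.
Proof.
move=> s0 t0 hq hp.
have ab0 : a + b != 0.
  apply/eqP => e; rewrite e mulr0 in hq; lra.
have ac0 : a + c != 0.
  apply/eqP => e; rewrite e mulr0 in hp; lra.
have E1 : (s `^ q) `^ a * (s `^ q) `^ b = s.
  rewrite -(@powRD R (s `^ q) a b); last by rewrite (negbTE ab0).
  by rewrite -powRrM hq powRr1.
have E2 : (t `^ p) `^ a * (t `^ p) `^ c = t.
  rewrite -(@powRD R (t `^ p) a c); last by rewrite (negbTE ac0).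
  by rewrite -powRrM hp powRr1.
rewrite powRM ?powR_ge0 //.
rewrite -[in LHS]E1 -[in LHS]E2.
move: ((s `^ q) `^ a) ((s `^ q) `^ b) ((t `^ p) `^ a) ((t `^ p) `^ c) => X1 X2 X3 X4.
ring.
Qed.


End S.

Theorem mainTheorem9 (R : realType) (m n : nat) (p q r : R) :
  (m = n %[mod 2])%N ->
  1 < p -> 1 < q -> 1 < r ->
  r^-1 = p^-1 + q^-1 - 1 ->
  (2 / (r + 1) +
     \sum_(j < (m + n)%N)
       (('C(m + n, j.+1))%:R `^ (r + 1) - ('C(m + n, j))%:R `^ (r + 1)) /
       ((r + 1) * (('C(m + n, j.+1))%:R - ('C(m + n, j))%:R))) `^ r^-1
  <= (\sum_(j < m.+1) ('C(m, j))%:R `^ q) `^ q^-1 *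
     (\sum_(j < n.+1) ('C(n, j))%:R `^ p) `^ p^-1.
Proof.
move=> _ p1 q1 r1 hr.
have p0 : 0 < p by lra.
have q0 : 0 < q by lra.
have r0 : 0 < r by lra.
pose a := r^-1. pose b := 1 - p^-1. pose c := 1 - q^-1.
have a0 : 0 < a by rewrite /a invr_gt0.
have b0 : 0 < b by rewrite /b subr_gt0 invf_lt1.
have c0 : 0 < c by rewrite /c subr_gt0 invf_lt1.
have abc : a + b + c = 1 by rewrite /a /b /c hr; lra.
have abq : a + b = q^-1 by rewrite /a /b hr; lra.
have acp : a + c = p^-1 by rewrite /a /c hr; lra.
have hq : q * (a + b) = 1 by rewrite abq mulfV ?gt_eqF.
have hp : p * (a + c) = 1 by rewrite acp mulfV ?gt_eqF.
have ra : r * a = 1 by rewrite /a mulfV ?gt_eqF.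
pose f i := ('C(m, i))%:R `^ q : R.
pose g j := ('C(n, j))%:R `^ p : R.
have f0 i : 0 <= f i by apply: powR_ge0.
have g0 j : 0 <= g j by apply: powR_ge0.
have fz i : (m < i)%N -> f i = 0 by move=> hi; rewrite /f bin_small // powR0 ?gt_eqF.
have gz i : (n < i)%N -> g i = 0 by move=> hi; rewrite /g bin_small // powR0 ?gt_eqF.
set A := \sum_(j < m.+1) _.
set B := \sum_(j < n.+1) _.
have A1 : 1 <= A.
  rewrite /A big_ord_recl /= bin0 powR1 lerDl; apply: sumr_ge0 => i _; exact: powR_ge0.
have B1 : 1 <= B.
  rewrite /B big_ord_recl /= bin0 powR1 lerDl; apply: sumr_ge0 => i _; exact: powR_ge0.
have A0 : 0 < A by lra.
have bpos k : (k <= m + n)%N -> 0 < ('C(m + n, k))%:R :> R.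
  by move=> hk; rewrite ltr0n bin_gt0.
have B0 : 0 < B by lra.
pose U k := \sum_(i < k.+1) f i * g (k - i)%N.
pose C := A `^ (b * r) * B `^ (c * r).
have C0 : 0 <= C by rewrite /C mulr_ge0 ?powR_ge0.
have U0 k : 0 <= U k by apply: sumr_ge0 => i _; rewrite mulr_ge0.
have Hk k : ('C(m + n, k))%:R `^ r <= U k * C.
  have V : ('C(m + n, k))%:R = \sum_(i < k.+1) (f i * g (k - i)%N) `^ a * (f i) `^ b * (g (k - i)%N) `^ c :> R.
    rewrite -binomial.Vandermonde natr_sum; apply: eq_bigr => i _; rewrite natrM /f /g.
    by apply: decomp => //; apply: ler0n.
  have hY : \sum_(i < k.+1) f i <= A by exact: psum_le.
  have hZ : \sum_(i < k.+1) g (k - i)%N <= B by rewrite rev_sum; exact: psum_le.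
  have H := @holder3 R k.+1 (fun i => f i * g (k - i)%N) f (fun i => g (k - i)%N) a b c A B
     a0 b0 c0 abc (fun i => mulr_ge0 (f0 i) (g0 _)) f0 (fun i => g0 _) hY hZ A0 B0.
  rewrite -V -/(U k) in H.
  have H2 : ('C(m + n, k))%:R `^ r <= (U k `^ a * A `^ b * B `^ c) `^ r.
    apply: ge0_ler_powR => //; first exact: ltW.
      by rewrite nnegrE ler0n.
    by rewrite nnegrE !mulr_ge0 ?powR_ge0.
  apply: (le_trans H2).
  rewrite powRM ?mulr_ge0 ?powR_ge0 // powRM ?powR_ge0 //.
  rewrite -!powRrM [a * r]mulrC ra powRr1 // /C mulrA; exact: lexx.
have S2 : \sum_(k < (m + n).+1) ('C(m + n, k))%:R `^ r <= A * B * C.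
  apply: (le_trans (y := \sum_(k < (m + n).+1) U k * C)).
    by apply: ler_sum => k _; apply: Hk.
  rewrite -mulr_suml ler_wpM2r //.
  apply: (le_trans (conv_le _ f0 g0)).
  apply: ler_pM; try apply: sumr_ge0 => i _ //; exact: psum_le.
set Sb := \sum_(k < (m + n).+1) _ in S2.
set T := \sum_(j < (m + n)%N) _.
have HT : 0 <= T <= \sum_(j < (m + n)%N) (('C(m + n, j.+1))%:R `^ r + ('C(m + n, j))%:R `^ r) / 2.
  apply/andP; split.
    by apply: sumr_ge0 => j _; have /andP[] := @HH R _ _ r (bpos j.+1 (ltn_ord j)) (bpos j (ltnW (ltn_ord j))) r1.
  by apply: ler_sum => j _; have /andP[] := @HH R _ _ r (bpos j.+1 (ltn_ord j)) (bpos j (ltnW (ltn_ord j))) r1.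
have e1 : Sb = 1 + \sum_(j < (m + n)%N) ('C(m + n, j.+1))%:R `^ r.
  by rewrite /Sb big_ord_recl /= bin0 powR1.
have e2 : Sb = \sum_(j < (m + n)%N) ('C(m + n, j))%:R `^ r + 1.
  by rewrite /Sb big_ord_recr /= binn powR1.
have e3 : \sum_(j < (m + n)%N) (('C(m + n, j.+1))%:R `^ r + ('C(m + n, j))%:R `^ r) / 2 = Sb - 1.
  rewrite -mulr_suml big_split /=.
  move: e1 e2; move: (\sum_(j < (m + n)%N) ('C(m + n, j.+1))%:R `^ r) (\sum_(j < (m + n)%N) ('C(m + n, j))%:R `^ r) => s1 s2 e1 e2.
  rewrite e1 in e2 *; lra.
have h2r : 2 / (r + 1) <= 1 by rewrite ler_pdivrMr ?mul1r; lra.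
have h2r0 : 0 <= 2 / (r + 1) by apply: divr_ge0; lra.
rewrite e3 in HT.
have L0 : 0 <= 2 / (r + 1) + T by move: HT => /andP[? ?]; lra.
have LS : 2 / (r + 1) + T <= Sb by move: HT => /andP[? ?]; lra.
have Sb0 : 0 <= Sb by lra.
apply: (le_trans (y := Sb `^ a)).
  apply: ge0_ler_powR; [exact: ltW | by rewrite nnegrE | by rewrite nnegrE | exact: LS].
apply: (le_trans (y := (A * B * C) `^ a)).
  have A0' := ltW A0. have B0' := ltW B0.
  apply: ge0_ler_powR; [exact: ltW | by rewrite nnegrE | by rewrite nnegrE; apply: mulr_ge0 => //; apply: mulr_ge0 | exact: S2].
have A0' := ltW A0. have B0' := ltW B0.
have br : b * r * a = b by rewrite -mulrA ra mulr1.
have cr : c * r * a = c by rewrite -mulrA ra mulr1.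
rewrite /C !powRM ?mulr_ge0 ?powR_ge0 // -!powRrM br cr.
have EA : A `^ a * A `^ b = A `^ q^-1.
  by rewrite -abq (@powRD R A a b) // (gt_eqF A0) implybT.
have EB : B `^ a * B `^ c = B `^ p^-1.
  by rewrite -acp (@powRD R B a c) // (gt_eqF B0) implybT.
rewrite -EA -EB.
move: (A `^ a) (A `^ b) (B `^ a) (B `^ c) => X1 X2 X3 X4.
rewrite le_eqVlt; apply/orP; left; apply/eqP; ring.
Qed.
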